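(* Let $H$ satisfy (C3), (CNH), (CVX). Fix $T>0$ and a Lipschitz $W:\mathbb{R}\to\mathbb{R}$ with $I^{HJ}_T(W)\ne\emptyset$. Then for every $U_o\in I^{HJ}_T(W)$ and every $x\in\mathbb{R}$, $U_o(x)\ge U_o^*(x)$, where $U_o^*(x)=\sup\{W(q(T))-\int_0^TL(q(s),\dot q(s))\,ds:\ q\in\mathcal{R}_T,\ q(0)=x\}$.
   Context: (C3) $H\in C^3(\mathbb{R}^2;\mathbb{R})$; (CNH) there exists $X>0$ with $\partial_xH(x,p)=0$ whenever $|x|\ge X$; (CVX) for each $x$, $p\mapsto\partial_pH(x,p)$ is an increasing $C^1$-diffeomorphism of $\mathbb{R}$ onto itself. $L(x,v)=\sup_p(pv-H(x,p))$. $\mathcal{R}_T$: the $q\in C^1([0,T])$ such that some $p\in C^1([0,T])$ makes $(q,p)$ solve $\dot q=\partial_pH(q,p)$, $\dot p=-\partial_xH(q,p)$. $I^{HJ}_T(W)$: the set of Lipschitz $U_o$ such that the viscosity (Crandall–Lions) solution of $\partial_tU+H(x,\partial_xU)=0$, $U(0)=U_o$, equals $W$ at time $T$. *)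

(* Defs.v *)
From Stdlib Require Import Reals.
From Coquelicot Require Import Coquelicot.
Open Scope R_scope.

(* (C3): H is C^3 on R^2.  D i j is the partial derivative d_x^i d_p^j H;
   mixed derivatives are taken in either order (Schwarz), all continuous. *)
Definition C3 (H : R -> R -> R) : Prop :=
  exists D : nat -> nat -> R -> R -> R,
    (forall x p, D 0%nat 0%nat x p = H x p) /\
    (forall (i j : nat) x p, (i + j < 3)%nat ->
        is_derive (fun y => D i j y p) x (D (S i) j x p) /\
        is_derive (fun q => D i j x q) p (D i (S j) x p)) /\
    (forall (i j : nat) x p, (i + j <= 3)%nat -> continuity_2d_pt (D i j) x p).

Definition dxH (H : R -> R -> R) (x p : R) : R := Derive (fun y => H y p) x.
Definition dpH (H : R -> R -> R) (x p : R) : R := Derive (fun q => H x q) p.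

Definition CNH (H : R -> R -> R) : Prop :=
  exists X, 0 < X /\ forall x p, X <= Rabs x -> dxH H x p = 0.

Definition C1fun (f : R -> R) : Prop :=
  exists f' : R -> R, forall a, is_derive f a (f' a) /\ continuous f' a.

Definition CVX (H : R -> R -> R) : Prop :=
  forall x,
    (forall a b, a < b -> dpH H x a < dpH H x b) /\
    C1fun (dpH H x) /\
    exists g : R -> R,
      (forall a, g (dpH H x a) = a) /\ (forall b, dpH H x (g b) = b) /\ C1fun g.

Definition Lag (H : R -> R -> R) (x v : R) : R :=
  real (Lub_Rbar (fun y => exists p, y = p * v - H x p)).

Definition deriv_on (a b : R) (f f' : R -> R) : Prop :=
  forall t, a <= t <= b ->
    filterlim (fun h => (f (t + h) - f t) / h)
      (within (fun h => h <> 0 /\ a <= t + h <= b) (locally 0))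
      (locally (f' t)).

Definition cont_on (a b : R) (f : R -> R) : Prop :=
  forall t, a <= t <= b ->
    filterlim f (within (fun s => a <= s <= b) (locally t)) (locally (f t)).

Definition C1_on (a b : R) (f f' : R -> R) : Prop :=
  deriv_on a b f f' /\ cont_on a b f'.

Definition in_RT (H : R -> R -> R) (T : R) (q : R -> R) : Prop :=
  exists q' p p' : R -> R,
    C1_on 0 T q q' /\ C1_on 0 T p p' /\
    forall t, 0 <= t <= T ->
      q' t = dpH H (q t) (p t) /\ p' t = - dxH H (q t) (p t).

Definition Lipschitz (f : R -> R) : Prop :=
  exists K, forall x y, Rabs (f x - f y) <= K * Rabs (x - y).

Definition C1_2d (phi : R -> R -> R) (phit phix : R -> R -> R) : Prop :=
  forall t x,
    is_derive (fun s => phi s x) t (phit t x) /\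
    is_derive (fun y => phi t y) x (phix t x) /\
    continuity_2d_pt phit t x /\ continuity_2d_pt phix t x.

(* Crandall--Lions viscosity solution of U_t + H(x, U_x) = 0 on (0,T) x R,
   continuous on [0,T] x R (here: Lipschitz), with U(0,.) = U0. *)
Definition visc_sub_super (H : R -> R -> R) (T : R) (U : R -> R -> R) : Prop :=
  forall (phi phit phix : R -> R -> R) (t x : R), 0 < t < T ->
    C1_2d phi phit phix ->
    ((exists r, 0 < r /\ forall s y, 0 < s < T -> Rabs (s - t) < r -> Rabs (y - x) < r ->
        U s y - phi s y <= U t x - phi t x) ->
       phit t x + H x (phix t x) <= 0) /\
    ((exists r, 0 < r /\ forall s y, 0 < s < T -> Rabs (s - t) < r -> Rabs (y - x) < r ->
        U t x - phi t x <= U s y - phi s y) ->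
       phit t x + H x (phix t x) >= 0).

Definition Lipschitz_on_strip (T : R) (U : R -> R -> R) : Prop :=
  exists K, forall s t y x, 0 <= s <= T -> 0 <= t <= T ->
    Rabs (U s y - U t x) <= K * (Rabs (s - t) + Rabs (y - x)).

Definition visc_sol (H : R -> R -> R) (T : R) (U0 : R -> R) (U : R -> R -> R) : Prop :=
  Lipschitz_on_strip T U /\ (forall x, U 0 x = U0 x) /\ visc_sub_super H T U.

Definition I_HJ (H : R -> R -> R) (T : R) (W : R -> R) (U0 : R -> R) : Prop :=
  Lipschitz U0 /\ exists U, visc_sol H T U0 U /\ forall x, U T x = W x.

Definition Ustar (H : R -> R -> R) (T : R) (W : R -> R) (x : R) : Rbar :=
  Lub_Rbar (fun y => exists q q' : R -> R,
      in_RT H T q /\ deriv_on 0 T q q' /\ q 0 = x /\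
      y = W (q T) - RInt (fun s => Lag H (q s) (q' s)) 0 T).

(* Main.v *)
Require Import Defs.
From Stdlib Require Import Reals Lra Psatz.
From Coquelicot Require Import Coquelicot.
Open Scope R_scope.


Lemma ballR (x e y : R) : ball x e y <-> Rabs (y - x) < e.
Proof. unfold ball; simpl; unfold AbsRing_ball, abs, minus, plus, opp; simpl. tauto. Qed.

Lemma cont_eps (f : R -> R) x : continuous f x -> forall eps, 0 < eps ->
  exists d, 0 < d /\ forall y, Rabs (y - x) < d -> Rabs (f y - f x) < eps.
Proof.
  intros Hc eps He.
  destruct (proj1 (filterlim_locally f (f x)) Hc (mkposreal eps He)) as [d Hd].
  exists d; split; [apply cond_pos|]. intros y Hy. apply ballR. apply Hd. apply ballR. exact Hy.
Qed.

Lemma eps_cont (f : R -> R) x : (forall eps, 0 < eps ->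
  exists d, 0 < d /\ forall y, Rabs (y - x) < d -> Rabs (f y - f x) < eps) -> continuous f x.
Proof.
  intros H. apply (proj2 (filterlim_locally f (f x))). intros eps.
  destruct (H eps (cond_pos eps)) as [d [Hd Hd']].
  exists (mkposreal d Hd). intros y Hy. apply ballR. apply Hd'. apply ballR. exact Hy.
Qed.

Lemma cR_plus (f g : R -> R) x : continuous f x -> continuous g x -> continuous (fun y => f y + g y) x.
Proof. intros; exact (continuous_plus f g x H H0). Qed.
Lemma cR_minus (f g : R -> R) x : continuous f x -> continuous g x -> continuous (fun y => f y - g y) x.
Proof. intros; exact (continuous_minus f g x H H0). Qed.
Lemma cR_mult (f g : R -> R) x : continuous f x -> continuous g x -> continuous (fun y => f y * g y) x.
Proof. intros; exact (continuous_mult f g x H H0). Qed.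
Lemma cR_const (c x : R) : continuous (fun _ : R => c) x.
Proof. exact (continuous_const c x). Qed.
Lemma cR_id (x : R) : continuous (fun y : R => y) x.
Proof. exact (continuous_id x). Qed.

Lemma cont_pt_of (f : R -> R) x : continuous f x -> continuity_pt f x.
Proof. intros; apply continuity_pt_filterlim; exact H. Qed.

Definition LipU (U : R -> R -> R) (T K : R) : Prop :=
  forall s t y x, 0 <= s <= T -> 0 <= t <= T ->
    Rabs (U s y - U t x) <= K * (Rabs (s - t) + Rabs (y - x)).

Definition Fz (U : R -> R -> R) (Q G : R -> R) (e dl t z : R) : R :=
  U t (Q t + z) - z * z / (2 * dl) - G t - e * t.

Definition mz U Q G e dl Rr t :=
  real (Lub_Rbar (fun v => exists z, -Rr <= z <= Rr /\ v = Fz U Q G e dl t z)).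

Lemma Fz_cont U T K Q G e dl t z : LipU U T K -> 0 <= K -> 0 <= t <= T ->
  continuous (Fz U Q G e dl t) z.
Proof.
  intros HL HK Ht. unfold Fz.
  apply cR_minus; [|apply cR_const].
  apply cR_minus; [|apply cR_const].
  apply cR_minus.
  - apply eps_cont. intros eps He. exists (eps / (K + 1)). split.
    + apply Rdiv_lt_0_compat; lra.
    + intros y Hy. eapply Rle_lt_trans. apply HL; auto.
      rewrite Rminus_diag, Rabs_R0, Rplus_0_l.
      replace (Q t + y - (Q t + z)) with (y - z) by ring.
      apply Rle_lt_trans with (K * (eps / (K+1))).
      apply Rmult_le_compat_l; lra.
      apply Rlt_le_trans with ((K+1) * (eps / (K+1))).
      apply Rmult_lt_compat_r. apply Rdiv_lt_0_compat; lra. lra.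
      right; field; lra.
  - apply cR_mult. apply cR_mult; apply cR_id. apply cR_const.
Qed.

Lemma mz_att U T K Q G e dl Rr t : LipU U T K -> 0 <= K -> 0 <= t <= T -> 0 <= Rr ->
  exists z, -Rr <= z <= Rr /\ mz U Q G e dl Rr t = Fz U Q G e dl t z /\
    forall z', -Rr <= z' <= Rr -> Fz U Q G e dl t z' <= Fz U Q G e dl t z.
Proof.
  intros HL HK Ht HR.
  destruct (continuity_ab_maj (Fz U Q G e dl t) (-Rr) Rr) as [zm [H1 H2]]. lra.
  intros c _. apply cont_pt_of. eapply Fz_cont; eauto.
  exists zm. split; auto. split; auto.
  unfold mz. rewrite (is_lub_Rbar_unique _ (Finite (Fz U Q G e dl t zm))). reflexivity.
  split.
  - intros v [z [Hz ->]]. simpl. apply H1. exact Hz.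
  - intros b Hb. apply Hb. exists zm. split; auto.
Qed.

Lemma sqr_abs z : z * z = Rabs z * Rabs z.
Proof. unfold Rabs; destruct Rcase_abs; ring. Qed.

Lemma quad_bound K dl z : 0 < dl -> 0 <= K -> K * Rabs z - z * z / (2 * dl) <= K * K * dl / 2.
Proof.
  intros Hd HK. rewrite sqr_abs. assert (0 <= Rabs z) by apply Rabs_pos; remember (Rabs z) as a; clear Heqa.
  assert (0 <= (a - K * dl) * (a - K * dl)) by (apply Rle_0_sqr).
  apply Rmult_le_reg_r with (2 * dl). lra.
  unfold Rdiv. replace ((K * a - a * a * / (2 * dl)) * (2 * dl)) with (2*dl*K*a - a*a) by (field; lra).
  replace (K * K * dl * / 2 * (2 * dl)) with (K*K*dl*dl) by field. nra.
Qed.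

Lemma quad_neg K dl z : 0 < dl -> 0 <= K -> 2 * K * dl <= Rabs z -> K * Rabs z - z * z / (2 * dl) <= 0.
Proof.
  intros Hd HK Hz. rewrite sqr_abs. assert (0 <= Rabs z) by apply Rabs_pos; remember (Rabs z) as a; clear Heqa.
  apply Rmult_le_reg_r with (2 * dl). lra.
  unfold Rdiv. replace ((K * a - a * a * / (2 * dl)) * (2 * dl)) with (2*dl*K*a - a*a) by (field; lra).
  rewrite Rmult_0_l. nra.
Qed.

Lemma quad_small K dl z : 0 < dl -> 0 <= K -> z * z / (2 * dl) <= K * Rabs z -> Rabs z <= 2 * K * dl.
Proof.
  intros Hd HK Hz. rewrite sqr_abs in Hz. assert (0 <= Rabs z) by apply Rabs_pos; remember (Rabs z) as a; clear Heqa.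

  assert (a * a <= 2 * dl * K * a).
  { apply Rmult_le_compat_r with (r := 2 * dl) in Hz. 2: lra.
    unfold Rdiv in Hz. replace (a * a * / (2 * dl) * (2 * dl)) with (a*a) in Hz by (field; lra). nra. }
  destruct (Req_dec a 0). subst; nra. assert (0 < a) by lra. apply Rmult_le_reg_r with a; nra.
Qed.

Section MZ.
Lemma Fz_diff0 U T K Q G e dl t z : LipU U T K -> 0 <= t <= T ->
  Fz U Q G e dl t z - Fz U Q G e dl t 0 <= K * Rabs z - z * z / (2 * dl).
Proof.
  intros HL Ht. unfold Fz.
  assert (H1 := HL t t (Q t + z) (Q t + 0) Ht Ht).
  rewrite Rminus_diag, Rabs_R0, Rplus_0_l in H1.
  replace (Q t + z - (Q t + 0)) with z in H1 by ring.
  apply Rabs_le_between in H1. 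
  replace (0 * 0 / (2 * dl)) with 0 by (unfold Rdiv; ring). lra.
Qed.

Lemma mz_ge U T K Q G e dl Rr t z : LipU U T K -> 0 <= K -> 0 < dl -> 0 <= t <= T ->
  2 * K * dl <= Rr -> Fz U Q G e dl t z <= mz U Q G e dl Rr t.
Proof.
  intros HL HK Hd Ht HR.
  assert (0 <= Rr) by nra.
  destruct (mz_att U T K Q G e dl Rr t HL HK Ht H) as [zm [Hz [Hm Hmax]]].
  rewrite Hm.
  destruct (Rle_lt_dec (Rabs z) Rr).
  - apply Hmax. apply Rabs_le_between in r. lra.
  - apply Rle_trans with (Fz U Q G e dl t 0).
    + assert (H1 := Fz_diff0 U T K Q G e dl t z HL Ht).
      assert (H2 := quad_neg K dl z Hd HK ltac:(lra)). lra.
    + apply Hmax. lra.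
Qed.

Lemma mz_up U T K Q G e dl Rr t : LipU U T K -> 0 <= K -> 0 < dl -> 0 <= t <= T -> 0 <= Rr ->
  mz U Q G e dl Rr t <= U t (Q t) - G t - e * t + K * K * dl / 2.
Proof.
  intros HL HK Hd Ht HR.
  destruct (mz_att U T K Q G e dl Rr t HL HK Ht HR) as [zm [Hz [Hm Hmax]]].
  rewrite Hm.
  assert (H1 := Fz_diff0 U T K Q G e dl t zm HL Ht).
  assert (H2 := quad_bound K dl zm Hd HK).
  unfold Fz at 2 in H1. rewrite Rplus_0_r in H1.
  replace (0 * 0 / (2 * dl)) with 0 in H1 by (unfold Rdiv; ring). lra.
Qed.

Lemma mz_lo U T K Q G e dl Rr t : LipU U T K -> 0 <= K -> 0 < dl -> 0 <= t <= T -> 0 <= Rr ->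
  U t (Q t) - G t - e * t <= mz U Q G e dl Rr t.
Proof.
  intros HL HK Hd Ht HR.
  destruct (mz_att U T K Q G e dl Rr t HL HK Ht HR) as [zm [Hz [Hm Hmax]]].
  rewrite Hm. eapply Rle_trans; [|apply (Hmax 0); lra].
  unfold Fz. rewrite Rplus_0_r. right; unfold Rdiv; ring.
Qed.

Lemma mz_lip U T K Q G e dl Rr s t : LipU U T K -> 0 <= K -> 0 < dl -> 0 <= s <= T -> 0 <= t <= T -> 0 <= Rr ->
  mz U Q G e dl Rr s - mz U Q G e dl Rr t <=
    K * (Rabs (s - t) + Rabs (Q s - Q t)) + Rabs (G s - G t) + Rabs e * Rabs (s - t).
Proof.
  intros HL HK Hd Hs Ht HR.
  destruct (mz_att U T K Q G e dl Rr s HL HK Hs HR) as [zs [Hz [Hm Hmax]]].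
  destruct (mz_att U T K Q G e dl Rr t HL HK Ht HR) as [zt [Hzt [Hmt Hmaxt]]].
  rewrite Hm, Hmt. assert (H3 := Hmaxt zs Hz).
  assert (H1 := HL s t (Q s + zs) (Q t + zs) Hs Ht).
  replace (Q s + zs - (Q t + zs)) with (Q s - Q t) in H1 by ring.
  apply Rabs_le_between in H1.
  assert (H4 := Rle_abs (G s - G t)). assert (H5 := Rle_abs (-(G s - G t))). rewrite Rabs_Ropp in H5.
  assert (H6 : - (e * (s - t)) <= Rabs e * Rabs (s - t)).
  { rewrite <- Rabs_mult. rewrite <- Rabs_Ropp. apply Rle_abs. }
  unfold Fz in *. lra.
Qed.
End MZ.

Lemma mz_cont U T K Q G e dl Rr t : LipU U T K -> 0 <= K -> 0 < dl -> 0 < t < T -> 0 <= Rr ->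
  continuous Q t -> continuous G t -> continuous (mz U Q G e dl Rr) t.
Proof.
  intros HL HK Hd Ht HR HQ HG. apply eps_cont. intros eps He.
  set (c1 := eps / (3 * (K + 1))). set (c3 := eps / (3 * (K + Rabs e + 1))).
  assert (Hae := Rabs_pos e).
  assert (Hc1 : 0 < c1) by (unfold c1; apply Rdiv_lt_0_compat; lra).
  assert (Hc3 : 0 < c3) by (unfold c3; apply Rdiv_lt_0_compat; lra).
  destruct (cont_eps Q t HQ c1 Hc1) as [d1 [Hd1 Hd1']].
  destruct (cont_eps G t HG (eps/3) ltac:(lra)) as [d2 [Hd2 Hd2']].
  exists (Rmin (Rmin d1 d2) (Rmin c3 (Rmin t (T - t)))). split.
  { repeat apply Rmin_pos; lra. }
  intros y Hy.
  assert (Hy1 : Rabs (y - t) < d1) by (eapply Rlt_le_trans; [exact Hy|]; repeat (apply Rmin_l || (eapply Rle_trans; [apply Rmin_l|]) )).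
  assert (Hy2 : Rabs (y - t) < d2).
  { eapply Rlt_le_trans; [exact Hy|]. eapply Rle_trans; [apply Rmin_l|apply Rmin_r]. }
  assert (Hy3 : Rabs (y - t) < c3).
  { eapply Rlt_le_trans; [exact Hy|]. eapply Rle_trans; [apply Rmin_r|apply Rmin_l]. }
  assert (Hy4 : Rabs (y - t) < Rmin t (T - t)).
  { eapply Rlt_le_trans; [exact Hy|]. eapply Rle_trans; [apply Rmin_r|apply Rmin_r]. }
  assert (Hyr : 0 <= y <= T).
  { assert (H5 := Rmin_l t (T - t)). assert (H6 := Rmin_r t (T - t)).
    apply Rabs_lt_between in Hy4. lra. }
  assert (Htr : 0 <= t <= T) by lra.
  assert (L1 := mz_lip U T K Q G e dl Rr y t HL HK Hd Hyr Htr HR).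
  assert (L2 := mz_lip U T K Q G e dl Rr t y HL HK Hd Htr Hyr HR).
  rewrite (Rabs_minus_sym t y), (Rabs_minus_sym (Q t)), (Rabs_minus_sym (G t)) in L2.
  assert (HQ1 := Hd1' y Hy1). assert (HG1 := Hd2' y Hy2).
  set (A := Rabs (y - t)) in *. set (Bq := Rabs (Q y - Q t)) in *.
  assert (HA : 0 <= A) by apply Rabs_pos. assert (HB : 0 <= Bq) by apply Rabs_pos.
  assert (E1 : (K + Rabs e + 1) * c3 = eps / 3) by (unfold c3; field; lra).
  assert (E2 : (K + 1) * c1 = eps / 3) by (unfold c1; field; lra).
  assert (F1 : (K + Rabs e) * A <= eps / 3) by nra.
  assert (F2 : K * Bq <= eps / 3) by nra.
  apply Rabs_lt_between. split; nra.
Qed.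

Lemma c2_1 (f : R -> R) s y : continuous f s -> continuity_2d_pt (fun u v => f u) s y.
Proof.
  intros H. apply (continuity_1d_2d_pt_comp f (fun u v => u)).
  apply cont_pt_of; exact H. apply continuity_2d_pt_id1.
Qed.

Lemma C1_test (Q Qd G Gd P Pd : R -> R) (dl e : R) : dl <> 0 ->
  (forall t, is_derive Q t (Qd t) /\ continuous Qd t) ->
  (forall t, is_derive G t (Gd t) /\ continuous Gd t) ->
  (forall t, is_derive P t (Pd t) /\ continuous Pd t) ->
  C1_2d (fun s y => (y - Q s) * (y - Q s) / (2 * dl) + G s + e * s + P s)
        (fun s y => - ((y - Q s) * Qd s) / dl + Gd s + e + Pd s)
        (fun s y => (y - Q s) / dl).
Proof.
  intros Hdl HQ HG HP s y.
  destruct (HQ s) as [HQ1 HQ2]. destruct (HG s) as [HG1 HG2]. destruct (HP s) as [HP1 HP2].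
  split; [|split; [|split]].
  - auto_derive.
    + repeat split; eexists; eassumption.
      replace (Derive (fun x : R => Q x) s) with (Qd s) by (symmetry; apply is_derive_unique; exact HQ1). replace (Derive (fun x : R => G x) s) with (Gd s) by (symmetry; apply is_derive_unique; exact HG1). replace (Derive (fun x : R => P x) s) with (Pd s) by (symmetry; apply is_derive_unique; exact HP1).
      field. exact Hdl.
  - auto_derive. auto. field. exact Hdl.
  - unfold Rdiv.
    repeat apply continuity_2d_pt_plus.
    + apply continuity_2d_pt_mult; [|apply continuity_2d_pt_const].
      apply continuity_2d_pt_opp. apply continuity_2d_pt_mult.
      apply continuity_2d_pt_minus. apply continuity_2d_pt_id2.
      apply (c2_1 Q). apply (ex_derive_continuous Q). exists (Qd s); exact HQ1.
      apply c2_1. exact HQ2.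
    + apply c2_1; exact HG2.
    + apply continuity_2d_pt_const.
    + apply c2_1; exact HP2.
  - unfold Rdiv. apply continuity_2d_pt_mult; [|apply continuity_2d_pt_const].
    apply continuity_2d_pt_minus. apply continuity_2d_pt_id2.
    apply (c2_1 Q). apply (ex_derive_continuous Q). exists (Qd s); exact HQ1.
Qed.

Definition pen (lam : R) (N : nat) (a c t : R) := lam * ((t - a) / (c - a)) ^ (S N).
Definition pend (lam : R) (N : nat) (a c t : R) := lam * (INR (S N) * ((t - a) / (c - a)) ^ N * / (c - a)).

Lemma pen_C1 lam N a c : a < c -> forall t, is_derive (pen lam N a c) t (pend lam N a c t) /\ continuous (pend lam N a c) t.
Proof.
  intros Hac t. split.
  - unfold pen, pend. auto_derive. auto. change (match N with 0%nat => 1 | S _ => INR N + 1 end) with (INR (S N)). unfold Rdiv, Rminus; ring.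
  - apply (ex_derive_continuous (pend lam N a c)). unfold pend. auto_derive. auto.
Qed.

Lemma pend_nonneg lam N a c t : 0 <= lam -> a < c -> a <= t -> 0 <= pend lam N a c t.
Proof.
  intros Hl Hac Ht. unfold pend. apply Rmult_le_pos; auto.
  apply Rmult_le_pos. apply Rmult_le_pos. apply pos_INR. apply pow_le.
  apply Rmult_le_pos; [lra| left; apply Rinv_0_lt_compat; lra].
  left; apply Rinv_0_lt_compat; lra.
Qed.

Lemma pen_a lam N a c : a < c -> pen lam N a c a = 0.
Proof. intros. unfold pen. replace ((a - a) / (c - a)) with 0 by (field; lra). simpl; ring. Qed.
Lemma pen_c lam N a c : a < c -> pen lam N a c c = lam.
Proof. intros. unfold pen. replace ((c - a) / (c - a)) with 1 by (field; lra). rewrite pow1; ring. Qed.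

Lemma pen_choose lam a b c al : a < b -> b < c -> 0 < lam -> 0 < al ->
  exists N, pen lam N a c b < al.
Proof.
  intros Hab Hbc Hl Hal.
  assert (Hr : Rabs ((b - a) / (c - a)) < 1).
  { rewrite Rabs_pos_eq. apply Rmult_lt_reg_r with (c - a). lra.
    unfold Rdiv; rewrite Rmult_assoc, Rinv_l; lra.
    apply Rmult_le_pos; [lra | left; apply Rinv_0_lt_compat; lra]. }
  destruct (pow_lt_1_zero _ Hr (al / lam) ltac:(apply Rdiv_lt_0_compat; lra)) as [N HN].
  exists N. specialize (HN (S N) ltac:(lia)).
  unfold pen. apply Rabs_lt_between in HN.
  apply Rmult_lt_reg_l with (/ lam). apply Rinv_0_lt_compat; lra.
  rewrite <- Rmult_assoc, Rinv_l by lra. rewrite Rmult_1_l. rewrite Rmult_comm. unfold Rdiv in HN. lra.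
Qed.

Definition SUB (H U : R -> R -> R) (T : R) : Prop :=
  forall (phi phit phix : R -> R -> R) (t x : R), 0 < t < T ->
    C1_2d phi phit phix ->
    (exists r, 0 < r /\ forall s y, 0 < s < T -> Rabs (s - t) < r -> Rabs (y - x) < r ->
        U s y - phi s y <= U t x - phi t x) ->
    phit t x + H x (phix t x) <= 0.

Lemma key_step (H U : R -> R -> R) (T K : R) (Q Qd G Gd : R -> R) a b eps :
  0 < T -> 0 <= K -> (forall x y, continuity_2d_pt H x y) -> LipU U T K -> SUB H U T ->
  (forall t, is_derive Q t (Qd t) /\ continuous Qd t) ->
  (forall t, is_derive G t (Gd t) /\ continuous Gd t) ->
  (forall t r, 0 < t < T -> r * Qd t - H (Q t) r <= Gd t) ->
  0 < a -> a < b -> b < T -> 0 < eps ->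
  exists dl0, 0 < dl0 /\ forall dl, 0 < dl -> dl <= dl0 ->
    U b (Q b) - G b - eps * b <= U a (Q a) - G a - eps * a + K * K * dl / 2.
Proof.
  intros HT HK HH HL HS HQ HG HLag Ha Hab HbT He.
  set (c := (b + T) / 2).
  assert (Hbc : b < c) by (unfold c; lra). assert (HcT : c < T) by (unfold c; lra).
  assert (HQc : forall t, continuity_pt Q t).
  { intros t. apply cont_pt_of. apply (ex_derive_continuous Q). exists (Qd t). apply HQ. }
  assert (HGc : forall t, continuous G t).
  { intros t. apply (ex_derive_continuous G). exists (Gd t). apply HG. }
  destruct (continuity_ab_maj Q a c ltac:(lra) (fun t _ => HQc t)) as [Mx [HMx _]].
  destruct (continuity_ab_maj (fun t => - Q t) a c ltac:(lra)) as [mn [Hmn _]].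
  { intros t _. apply continuity_pt_opp. apply HQc. }
  set (B := Rabs (Q Mx) + Rabs (Q mn)).
  assert (HB : forall t, a <= t <= c -> - B <= Q t <= B).
  { intros t Ht. specialize (HMx t Ht). specialize (Hmn t Ht).
    assert (H1 := Rle_abs (Q Mx)). assert (H2 := Rle_abs (- Q mn)). rewrite Rabs_Ropp in H2.
    assert (H3 := Rabs_pos (Q Mx)). assert (H4 := Rabs_pos (Q mn)). unfold B. split; lra. }
  destruct (uniform_continuity_2d H (-(B+1)) (B+1) (-(2*K+1)) (2*K+1)
             (fun x y _ _ => HH x y) (mkposreal eps He)) as [du Hdu].
  assert (Hdu0 := cond_pos du).
  exists (Rmin (1 / (2 * K + 1)) (du / (2 * K + 1))). split.
  { apply Rmin_pos; apply Rdiv_lt_0_compat; lra. }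
  intros dl Hdl Hdl0.
  assert (Hdl1 : 2 * K * dl < 1).
  { assert (dl <= 1 / (2*K+1)) by (eapply Rle_trans; [exact Hdl0| apply Rmin_l]).
    apply Rmult_le_compat_l with (r := 2*K+1) in H0; [|lra].
    replace ((2*K+1) * (1 / (2*K+1))) with 1 in H0 by (field; lra). nra. }
  assert (Hdl2 : 2 * K * dl < du).
  { assert (dl <= du / (2*K+1)) by (eapply Rle_trans; [exact Hdl0| apply Rmin_r]).
    apply Rmult_le_compat_l with (r := 2*K+1) in H0; [|lra].
    replace ((2*K+1) * (du / (2*K+1))) with (pos du) in H0 by (field; lra). nra. }
  set (Rr := 2 * K * dl).
  assert (HRr : 0 <= Rr) by (unfold Rr; nra).
  set (m := mz U Q G eps dl Rr).
  destruct (Rle_lt_dec (U b (Q b) - G b - eps * b) (U a (Q a) - G a - eps * a + K * K * dl / 2))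
    as [Hok|Hcon]; [exact Hok|]. exfalso.
  assert (Hmb := mz_lo U T K Q G eps dl Rr b HL HK Hdl ltac:(lra) HRr).
  assert (Hma := mz_up U T K Q G eps dl Rr a HL HK Hdl ltac:(lra) HRr).
  fold m in Hmb, Hma.
  set (al := m b - m a).
  assert (Hal : 0 < al) by (unfold al; lra).
  set (lam := Rabs (m c - m b) + al + 1).
  assert (Hlam : 0 < lam) by (unfold lam; assert (H0 := Rabs_pos (m c - m b)); lra).
  destruct (pen_choose lam a b c (al / 2) Hab Hbc Hlam ltac:(lra)) as [N HN].
  set (P := pen lam N a c). set (Pd := pend lam N a c).
  set (f := fun t => m t - P t).
  assert (Hfc : forall t, a <= t <= c -> continuity_pt f t).
  { intros t Ht. apply cont_pt_of. unfold f. apply cR_minus.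
    - unfold m. apply (mz_cont U T K Q G eps dl Rr t HL HK Hdl ltac:(lra) HRr).
      apply (ex_derive_continuous Q). exists (Qd t). apply HQ. apply HGc.
    - apply (ex_derive_continuous P). exists (Pd t). apply pen_C1. lra. }
  destruct (continuity_ab_maj f a c ltac:(lra) Hfc) as [th [Hth Hthr]].
  assert (Hfb := Hth b ltac:(lra)).
  assert (HPa : P a = 0) by (apply pen_a; lra).
  assert (HPc : P c = lam) by (apply pen_c; lra).
  assert (Hfa : f a < f b). { unfold f. rewrite HPa. change (P b) with (pen lam N a c b). unfold al in HN. lra. }
  assert (Hfc' : f c < f b).
  { unfold f. rewrite HPc. change (P b) with (pen lam N a c b). assert (H0 := Rle_abs (m c - m b)). assert (H1 : m c - m b + al + 1 <= lam) by (unfold lam; lra). lra. }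
  assert (Hth1 : a < th).
  { destruct (Req_dec th a) as [E|E]; [subst th; lra | destruct Hthr; lra]. }
  assert (Hth2 : th < c).
  { destruct (Req_dec th c) as [E|E]; [rewrite E in Hfb; lra | destruct Hthr; lra]. }
  destruct (mz_att U T K Q G eps dl Rr th HL HK ltac:(lra) HRr) as [zh [Hzh [Hmth Hmax]]].
  assert (Hz0 := Hmax 0 ltac:(lra)).
  assert (Hzs : Rabs zh <= 2 * K * dl).
  { apply quad_small; auto. assert (H0 := Fz_diff0 U T K Q G eps dl th zh HL ltac:(lra)). lra. }
  set (yh := Q th + zh). set (ph := zh / dl).
  assert (HSub := HS
    (fun s y => (y - Q s) * (y - Q s) / (2 * dl) + G s + eps * s + P s)
    (fun s y => - ((y - Q s) * Qd s) / dl + Gd s + eps + Pd s)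
    (fun s y => (y - Q s) / dl) th yh ltac:(lra)
    (C1_test Q Qd G Gd P Pd dl eps ltac:(lra) HQ HG (pen_C1 lam N a c ltac:(lra)))).
  simpl in HSub.
  replace (yh - Q th) with zh in HSub by (unfold yh; ring).
  assert (HSub' : - (zh * Qd th) / dl + Gd th + eps + Pd th + H yh (zh / dl) <= 0).
  { apply HSub. exists (Rmin (th - a) (c - th)). split. apply Rmin_pos; lra.
    intros s y Hs Hs1 Hs2.
    assert (Hsr : a < s < c).
    { assert (H1 := Rmin_l (th - a) (c - th)). assert (H2 := Rmin_r (th - a) (c - th)).
      apply Rabs_lt_between in Hs1. lra. }
    assert (E1 := mz_ge U T K Q G eps dl Rr s (y - Q s) HL HK Hdl ltac:(lra) ltac:(unfold Rr; lra)).
    assert (E2 := Hth s ltac:(lra)).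
    unfold Fz in E1. replace (Q s + (y - Q s)) with y in E1 by ring.
    unfold f, m in E2. rewrite Hmth in E2. unfold Fz in E2. fold yh in E2.
    revert E1 E2. generalize (P s) (P th) (mz U Q G eps dl Rr s). intros. lra. }
  assert (HPd : 0 <= Pd th) by (apply pend_nonneg; lra).
  assert (HL2 := HLag th ph ltac:(lra)).
  assert (E3 : - (zh * Qd th) / dl = - (ph * Qd th)) by (unfold ph; field; lra).
  assert (Hgap : eps <= H (Q th) ph - H yh ph) by (fold ph in HSub'; lra).
  assert (Hph : Rabs ph <= 2 * K).
  { unfold ph. unfold Rdiv. rewrite Rabs_mult, Rabs_inv, (Rabs_pos_eq dl) by lra.
    apply Rmult_le_reg_r with dl; auto. rewrite Rmult_assoc, Rinv_l by lra. lra. }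
  assert (HQth := HB th ltac:(lra)).
  apply Rabs_le_between in Hph. apply Rabs_le_between in Hzs.
  assert (Hu := Hdu (Q th) ph yh ph ltac:(lra) ltac:(lra) ltac:(unfold yh; lra) ltac:(lra)
                 ltac:(unfold yh; replace (Q th + zh - Q th) with zh by ring; apply Rabs_lt_between; lra)
                 ltac:(rewrite Rminus_diag, Rabs_R0; exact Hdu0)).
  simpl in Hu. apply Rabs_lt_between in Hu. lra.
Qed.

Lemma key (H U : R -> R -> R) (T K : R) (Q Qd G Gd : R -> R) a b :
  0 < T -> 0 <= K -> (forall x y, continuity_2d_pt H x y) -> LipU U T K -> SUB H U T ->
  (forall t, is_derive Q t (Qd t) /\ continuous Qd t) ->
  (forall t, is_derive G t (Gd t) /\ continuous Gd t) ->
  (forall t r, 0 < t < T -> r * Qd t - H (Q t) r <= Gd t) ->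
  0 < a -> a < b -> b < T ->
  U b (Q b) - G b <= U a (Q a) - G a.
Proof.
  intros HT HK HH HL HS HQ HG HLag Ha Hab HbT.
  apply Rle_plus_epsilon. intros e He.
  set (eps := e / (2 * (b - a))).
  assert (Heps : 0 < eps) by (unfold eps; apply Rdiv_lt_0_compat; lra).
  destruct (key_step H U T K Q Qd G Gd a b eps HT HK HH HL HS HQ HG HLag Ha Hab HbT Heps)
    as [dl0 [Hdl0 Hst]].
  set (dl := Rmin dl0 (e / (K * K + 1))).
  assert (HKK : 0 <= K * K) by nra.
  assert (Hdl : 0 < dl) by (unfold dl; apply Rmin_pos; auto; apply Rdiv_lt_0_compat; lra).
  specialize (Hst dl Hdl (Rmin_l _ _)).
  assert (Hdl2 : dl <= e / (K * K + 1)) by apply Rmin_r.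
  assert (E1 : K * K * dl / 2 <= e / 2).
  { apply Rmult_le_compat_l with (r := K * K) in Hdl2; auto.
    assert (K * K * (e / (K * K + 1)) <= e).
    { apply Rmult_le_reg_r with (K*K+1). lra.
      replace (K * K * (e / (K * K + 1)) * (K * K + 1)) with (K * K * e) by (field; lra). nra. }
    lra. }
  assert (E2 : eps * (b - a) = e / 2) by (unfold eps; field; lra).
  nra.
Qed.

Definition clamp (T s : R) := Rmax 0 (Rmin T s).

Lemma clamp_in T s : 0 < T -> 0 <= clamp T s <= T.
Proof. intros. unfold clamp, Rmax, Rmin; repeat destruct Rle_dec; lra. Qed.
Lemma clamp_id T s : 0 <= s <= T -> clamp T s = s.
Proof. intros. unfold clamp, Rmax, Rmin; repeat destruct Rle_dec; lra. Qed.
Lemma clamp_lip T s u : 0 < T -> Rabs (clamp T s - clamp T u) <= Rabs (s - u).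
Proof. intros. unfold clamp, Rmax, Rmin; repeat destruct Rle_dec; unfold Rabs; repeat destruct Rcase_abs; lra. Qed.

Definition wcont (T : R) (f : R -> R) : Prop :=
  forall t, 0 <= t <= T -> forall eps, 0 < eps ->
    exists d, 0 < d /\ forall s, 0 <= s <= T -> Rabs (s - t) < d -> Rabs (f s - f t) < eps.

Lemma wcont_clamp T f : 0 < T -> wcont T f -> forall s, continuous (fun u => f (clamp T u)) s.
Proof.
  intros HT Hf s. apply eps_cont. intros eps He.
  destruct (Hf (clamp T s) (clamp_in T s HT) eps He) as [d [Hd Hd']].
  exists d. split; auto. intros y Hy. apply Hd'. apply clamp_in; auto.
  eapply Rle_lt_trans. apply clamp_lip; auto. exact Hy.
Qed.

Lemma cont_on_wcont T f : cont_on 0 T f -> wcont T f.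
Proof.
  intros Hc t Ht eps He.
  destruct (proj1 (filterlim_locally f (f t)) (Hc t Ht) (mkposreal eps He)) as [d Hd].
  exists d. split. apply cond_pos. intros s Hs Hst. apply ballR. apply Hd. apply ballR. exact Hst. exact Hs.
Qed.

Lemma deriv_on_pt T f f' t : deriv_on 0 T f f' -> 0 <= t <= T ->
  exists d, 0 < d /\ forall h, h <> 0 -> 0 <= t + h <= T -> Rabs h < d ->
    Rabs ((f (t + h) - f t) / h - f' t) < 1.
Proof.
  intros Hd Ht.
  destruct (proj1 (filterlim_locally _ (f' t)) (Hd t Ht) (mkposreal 1 Rlt_0_1)) as [d Hd'].
  exists d. split. apply cond_pos. intros h Hh Hth Hhd.
  apply ballR. apply Hd'. apply ballR. rewrite Rminus_0_r. exact Hhd. split; auto.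
Qed.

Lemma deriv_on_wcont T f f' : deriv_on 0 T f f' -> wcont T f.
Proof.
  intros Hd t Ht eps He.
  destruct (deriv_on_pt T f f' t Hd Ht) as [d [Hd0 Hd1]].
  assert (HA := Rabs_pos (f' t)).
  exists (Rmin d (eps / (Rabs (f' t) + 1))). split.
  { apply Rmin_pos; auto. apply Rdiv_lt_0_compat; lra. }
  intros s Hs Hst.
  destruct (Req_dec s t) as [E|E].
  { subst. rewrite Rminus_diag, Rabs_R0. exact He. }
  assert (Hh : s - t <> 0) by lra.
  assert (Hq := Hd1 (s - t) Hh ltac:(replace (t + (s - t)) with s by ring; exact Hs)
                  ltac:(eapply Rlt_le_trans; [exact Hst| apply Rmin_l])).
  replace (t + (s - t)) with s in Hq by ring.
  assert (Hst2 : Rabs (s - t) < eps / (Rabs (f' t) + 1)) by (eapply Rlt_le_trans; [exact Hst| apply Rmin_r]).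
  replace (f s - f t) with ((s - t) * ((f s - f t) / (s - t))) by (field; exact Hh).
  rewrite Rabs_mult.
  assert (Hq2 : Rabs ((f s - f t) / (s - t)) <= Rabs (f' t) + 1).
  { assert (H1 := Rabs_triang ((f s - f t) / (s - t) - f' t) (f' t)).
    replace ((f s - f t) / (s - t) - f' t + f' t) with ((f s - f t) / (s - t)) in H1 by ring. lra. }
  assert (E1 : eps / (Rabs (f' t) + 1) * (Rabs (f' t) + 1) = eps) by (field; lra).
  assert (H0 := Rabs_pos (s - t)). assert (H1 := Rabs_pos ((f s - f t) / (s - t))).
  nra.
Qed.

Lemma deriv_on_int T f f' t : deriv_on 0 T f f' -> 0 < t < T -> is_derive f t (f' t).
Proof.
  intros Hd Ht. apply is_derive_Reals. intros eps He.
  assert (Ht2 : 0 <= t <= T) by lra.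
  destruct (proj1 (filterlim_locally _ (f' t)) (Hd t Ht2) (mkposreal eps He)) as [d Hd'].
  assert (Hpos : 0 < Rmin d (Rmin t (T - t))) by (apply Rmin_pos; [apply cond_pos| apply Rmin_pos; lra]).
  exists (mkposreal _ Hpos). intros h Hh Hhd. simpl in Hhd.
  assert (H1 := Rmin_l d (Rmin t (T - t))). assert (H2 := Rmin_r d (Rmin t (T - t))).
  assert (H3 := Rmin_l t (T - t)). assert (H4 := Rmin_r t (T - t)).
  apply ballR. apply Hd'. apply ballR. rewrite Rminus_0_r. lra.
  split; auto. apply Rabs_lt_between in Hhd. lra.
Qed.

Lemma RInt_deriv (f : R -> R) a : (forall x, continuous f x) -> forall x, is_derive (fun y => RInt f a y) x (f x).
Proof.
  intros Hc x. apply (is_derive_RInt f (fun y => RInt f a y) a x).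
  - exists (mkposreal 1 Rlt_0_1). intros y _. apply (RInt_correct f a y).
    apply ex_RInt_continuous. intros; apply Hc.
  - apply Hc.
Qed.

Lemma C3_cont H : C3 H -> forall x y, continuity_2d_pt H x y.
Proof.
  intros [D [H0 [Hd Hc]]] x y.
  apply continuity_2d_pt_ext with (D 0%nat 0%nat). intros; apply H0.
  apply Hc. lia.
Qed.

Lemma C3_dp H : C3 H -> forall x c, is_derive (fun q => H x q) c (dpH H x c).
Proof.
  intros [D [H0 [Hd Hc]]] x c.
  destruct (Hd 0%nat 0%nat x c ltac:(lia)) as [_ H2].
  assert (H3 : is_derive (fun q => H x q) c (D 0%nat 1%nat x c)).
  { apply is_derive_ext with (fun q => D 0%nat 0%nat x q). intros; apply H0. exact H2. }
  unfold dpH. replace (Derive (fun q : R => H x q) c) with (D 0%nat 1%nat x c) by (symmetry; apply is_derive_unique; exact H3). exact H3.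
Qed.

Lemma convex_H H : C3 H -> CVX H -> forall x p r, H x p + dpH H x p * (r - p) <= H x r.
Proof.
  intros HC3 HCV x p r.
  destruct (HCV x) as [Hmon _].
  destruct (MVT_gen (fun q => H x q) p r (dpH H x)) as [c [Hc Heq]].
  { intros; apply C3_dp; auto. }
  { intros y _. apply cont_pt_of. apply (ex_derive_continuous (fun q => H x q)).
    exists (dpH H x y). apply C3_dp; auto. }
  simpl in Heq.
  destruct (Rtotal_order p r) as [Hpr|[Hpr|Hpr]].
  - rewrite Rmin_left in Hc by lra. rewrite Rmax_right in Hc by lra.
    assert (dpH H x p <= dpH H x c).
    { destruct (Req_dec p c). subst; lra. left; apply Hmon; lra. }
    nra.
  - subst. lra.
  - rewrite Rmin_right in Hc by lra. rewrite Rmax_left in Hc by lra.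
    assert (dpH H x c <= dpH H x p).
    { destruct (Req_dec p c). subst; lra. left; apply Hmon; lra. }
    nra.
Qed.

Lemma Lag_val H : C3 H -> CVX H -> forall x p,
  Lag H x (dpH H x p) = p * dpH H x p - H x p.
Proof.
  intros HC3 HCV x p. unfold Lag.
  rewrite (is_lub_Rbar_unique _ (Finite (p * dpH H x p - H x p))). reflexivity.
  split.
  - intros y [r ->]. simpl. assert (Hc := convex_H H HC3 HCV x p r). nra.
  - intros b Hb. apply Hb. exists p. reflexivity.
Qed.

Lemma H_comp (Hf : R -> R -> R) (f g : R -> R) s :
  (forall x y, continuity_2d_pt Hf x y) -> continuous f s -> continuous g s ->
  continuous (fun u => Hf (f u) (g u)) s.
Proof.
  intros HH Hf1 Hg1.
  apply (continuous_comp_2 f g Hf s Hf1 Hg1).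
  apply (proj1 (continuity_2d_pt_filterlim Hf (f s) (g s))). apply HH.
Qed.

Lemma f_wcont (U : R -> R -> R) T K (q G : R -> R) : LipU U T K -> 0 <= K -> wcont T q ->
  (forall t, continuous G t) -> wcont T (fun t => U t (q t) - G t).
Proof.
  intros HL HK Hq HG t Ht e He.
  set (c1 := e / (3 * (K + 1))).
  assert (Hc1 : 0 < c1) by (unfold c1; apply Rdiv_lt_0_compat; lra).
  destruct (Hq t Ht c1 Hc1) as [d1 [Hd1 Hd1']].
  destruct (cont_eps G t (HG t) (e/3) ltac:(lra)) as [d2 [Hd2 Hd2']].
  exists (Rmin (Rmin d1 d2) c1). split. { repeat apply Rmin_pos; lra. }
  intros s Hs Hst.
  assert (H1 := Rmin_l (Rmin d1 d2) c1). assert (H2 := Rmin_r (Rmin d1 d2) c1).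
  assert (H3 := Rmin_l d1 d2). assert (H4 := Rmin_r d1 d2).
  assert (HQ1 := Hd1' s Hs ltac:(lra)). assert (HG1 := Hd2' s ltac:(lra)).
  assert (L := HL s t (q s) (q t) Hs Ht).
  assert (HA := Rabs_pos (s - t)). assert (HB := Rabs_pos (q s - q t)).
  assert (E2 : (K + 1) * c1 = e / 3) by (unfold c1; field; lra).
  assert (F1 : K * (Rabs (s - t) + Rabs (q s - q t)) <= 2 * (e / 3)) by nra.
  assert (F3 := Rabs_triang (U s (q s) - U t (q t)) (- (G s - G t))).
  rewrite Rabs_Ropp in F3.
  replace (U s (q s) - G s - (U t (q t) - G t)) with (U s (q s) - U t (q t) + - (G s - G t)) by ring.
  lra.
Qed.

Lemma is_derive_plusR (f g : R -> R) x df dg : is_derive f x df -> is_derive g x dg ->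
  is_derive (fun y => f y + g y) x (df + dg).
Proof. intros; exact (is_derive_plus f g x df dg H H0). Qed.
Lemma is_derive_minusR (f g : R -> R) x df dg : is_derive f x df -> is_derive g x dg ->
  is_derive (fun y => f y - g y) x (df - dg).
Proof. intros; exact (is_derive_minus f g x df dg H H0). Qed.

Theorem lemma5p7 (H : R -> R -> R) (T : R) (W : R -> R) :
  C3 H -> CNH H -> CVX H -> 0 < T -> Lipschitz W ->
  (exists U0, I_HJ H T W U0) ->
  forall U0, I_HJ H T W U0 ->
  forall x, Rbar_le (Ustar H T W x) (Finite (U0 x)).
Proof.
  intros HC3 _ HCVX HT _ _ U0 HU0 x.
  destruct HU0 as [_ [U [[[K0 HK0] [Hinit Hvisc]] HUT]]].
  set (K := Rabs K0).
  assert (HK : 0 <= K) by apply Rabs_pos.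
  assert (HL : LipU U T K).
  { intros s t y z Hs Ht. eapply Rle_trans. apply HK0; auto.
    apply Rmult_le_compat_r. assert (H1 := Rabs_pos (s - t)). assert (H2 := Rabs_pos (y - z)). lra.
    apply Rle_abs. }
  assert (HS : SUB H U T).
  { intros phi phit phix t z Ht HC Hm. exact (proj1 (Hvisc phi phit phix t z Ht HC) Hm). }
  assert (HH := C3_cont H HC3).
  unfold Ustar.
  match goal with |- Rbar_le (Lub_Rbar ?S) _ => destruct (Lub_Rbar_correct S) as [_ Hlub] end.
  apply Hlub. intros v [q [q' [HRT [Hq' [Hq0 Hv]]]]]. subst v. simpl.
  destruct HRT as [qd [p [pd [[Hqd Hqdc] [[Hpd Hpdc] Hham]]]]].
  set (qc := fun s => q (clamp T s)).
  set (pc := fun s => p (clamp T s)).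
  set (qdc := fun s => qd (clamp T s)).
  assert (Hqcc : forall s, continuous qc s) by (apply wcont_clamp; auto; eapply deriv_on_wcont; eauto).
  assert (Hpcc : forall s, continuous pc s) by (apply wcont_clamp; auto; eapply deriv_on_wcont; eauto).
  assert (Hqdcc : forall s, continuous qdc s) by (apply wcont_clamp; auto; apply cont_on_wcont; auto).
  set (lc := fun s => pc s * qdc s - H (qc s) (pc s)).
  assert (Hlcc : forall s, continuous lc s).
  { intros s. unfold lc. apply cR_minus. apply cR_mult; auto. apply H_comp; auto. }
  set (Q := fun s => q (T / 2) + RInt qdc (T / 2) s).
  set (G := fun s => RInt lc (T / 2) s).
  assert (HQ : forall t, is_derive Q t (qdc t) /\ continuous qdc t).
  { intros t. split; auto. unfold Q.
    replace (qdc t) with (0 + qdc t) by ring.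
    apply (is_derive_plusR (fun _ => q (T / 2)) (fun s => RInt qdc (T / 2) s)). apply (is_derive_const (q (T/2))).
    apply RInt_deriv; auto. }
  assert (HG : forall t, is_derive G t (lc t) /\ continuous lc t).
  { intros t. split; auto. unfold G. apply RInt_deriv; auto. }
  assert (Hqd_int : forall s, 0 < s < T -> is_derive q s (qdc s)).
  { intros s Hs. unfold qdc. rewrite clamp_id by lra. eapply deriv_on_int; eauto. }
  assert (HQq : forall t, 0 < t < T -> Q t = q t).
  { intros t Ht.
    destruct (MVT_gen (fun s => Q s - q s) (T / 2) t (fun _ => 0)) as [c [Hc Heq]].
    - intros s Hs. replace 0 with (qdc s - qdc s) by ring.
      apply (is_derive_minusR Q q). apply HQ.
      apply Hqd_int. split.
      + eapply Rle_lt_trans; [|apply Hs]. apply Rmin_glb; lra.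
      + eapply Rlt_le_trans; [apply Hs|]. apply Rmax_lub; lra.
    - intros s Hs. apply cont_pt_of. apply cR_minus.
      apply (ex_derive_continuous Q). exists (qdc s). apply HQ.
      apply (ex_derive_continuous q). exists (qdc s). apply Hqd_int. split.
      + eapply Rlt_le_trans; [|apply Hs]. apply Rmin_glb_lt; lra.
      + eapply Rle_lt_trans; [apply Hs|]. apply Rmax_lub_lt; lra.
    - simpl in Heq. unfold Q in Heq at 2. rewrite RInt_point in Heq.
      change (zero : R) with 0 in Heq. lra. }
  assert (HLag : forall t r, 0 < t < T -> r * qdc t - H (Q t) r <= lc t).
  { intros t r Ht. rewrite HQq by auto. unfold lc, qdc, pc, qc. rewrite clamp_id by lra.
    destruct (Hham t ltac:(lra)) as [E _]. rewrite E.
    assert (Hc := convex_H H HC3 HCVX (q t) (p t) r). lra. }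
  assert (Hkey := key H U T K Q qdc G lc).
  set (f := fun t => U t (q t) - G t).
  assert (Hmono : forall a b, 0 < a -> a < b -> b < T -> f b <= f a).
  { intros a b Ha Hab HbT. unfold f.
    assert (E := Hkey a b HT HK HH HL HS HQ HG HLag Ha Hab HbT).
    rewrite !HQq in E by lra. exact E. }
  assert (Hfc : wcont T f).
  { apply f_wcont with K; auto. eapply deriv_on_wcont; eauto. intros t; apply (ex_derive_continuous G). exists (lc t). apply HG. }
  assert (HfT : f T <= f 0).
  { apply Rle_plus_epsilon. intros e He.
    destruct (Hfc 0 ltac:(lra) (e/2) ltac:(lra)) as [d0 [Hd0 Hd0']].
    destruct (Hfc T ltac:(lra) (e/2) ltac:(lra)) as [dT [HdT HdT']].
    set (a := Rmin (d0 / 2) (T / 3)). set (b := Rmax (T - dT / 2) (2 * T / 3)).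
    assert (Ha1 : 0 < a) by (unfold a; apply Rmin_pos; lra).
    assert (Ha2 : a <= d0 / 2) by apply Rmin_l. assert (Ha3 : a <= T / 3) by apply Rmin_r.
    assert (Hb1 : T - dT / 2 <= b) by apply Rmax_l. assert (Hb2 : 2 * T / 3 <= b) by apply Rmax_r.
    assert (Hb3 : b < T) by (unfold b; apply Rmax_lub_lt; lra).
    assert (E1 := Hmono a b Ha1 ltac:(lra) Hb3).
    assert (E2 := Hd0' a ltac:(lra) ltac:(rewrite Rminus_0_r, Rabs_pos_eq; lra)).
    assert (E3 := HdT' b ltac:(lra) ltac:(rewrite Rabs_minus_sym, Rabs_pos_eq; lra)).
    apply Rabs_lt_between in E2. apply Rabs_lt_between in E3. lra. }
  assert (HR1 : RInt (fun s => Lag H (q s) (q' s)) 0 T = RInt lc 0 T).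
  { apply RInt_ext. intros s Hs. rewrite Rmin_left, Rmax_right in Hs by lra.
    assert (E1 : q' s = qd s).
    { assert (A1 := deriv_on_int T q q' s Hq' Hs). assert (A2 := deriv_on_int T q qd s Hqd Hs).
      rewrite <- (is_derive_unique _ _ _ A1). apply is_derive_unique. exact A2. }
    rewrite E1. destruct (Hham s ltac:(lra)) as [E2 _]. rewrite E2.
    rewrite Lag_val by auto. unfold lc, pc, qdc, qc. rewrite clamp_id by lra. rewrite E2. reflexivity. }
  assert (HR2 : RInt lc 0 T = G T - G 0).
  { unfold G. assert (Hch := RInt_Chasles lc (T / 2) 0 T).
    assert (X1 : ex_RInt lc (T / 2) 0) by (apply (ex_RInt_continuous (V := R_CompleteNormedModule) lc); intros; auto).
    assert (X2 : ex_RInt lc 0 T) by (apply (ex_RInt_continuous (V := R_CompleteNormedModule) lc); intros; auto).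
    specialize (Hch X1 X2). change plus with Rplus in Hch. simpl in Hch. lra. }
  rewrite HR1, HR2. rewrite <- HUT, <- Hinit, <- Hq0. unfold f in HfT. lra.
Qed.
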